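(* Let $n\ge1$, let $F$ be a finite field with $q$ elements, and let $M_n(F)$ be the monoid of all $n\times n$ matrices over $F$ under multiplication. If $q=2$, then the minimal degree of a faithful action of $M_n(F)$ by partial mappings is $2^n-1$. Otherwise, writing $q-1=p_1^{m_1}\cdots p_k^{m_k}$ for the prime factorization with distinct primes $p_i$, the minimal degree of a faithful action of $M_n(F)$ by partial mappings is $\frac{q^n-1}{q-1}\cdot\sum_{i=1}^kp_i^{m_i}$.
   Context: The minimal degree of a faithful action by partial mappings of a semigroup $S$ is the least $m$ such that $S$ is isomorphic to a subsemigroup of the monoid $PT_m$ of all partial maps on an $m$-element set (acting on the right). *)

(* Defs.v *)
From mathcomp Require Import all_boot all_algebra all_field.
Set Implicit Arguments. Unset Strict Implicit. Unset Printing Implicit Defensive.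

Definition pmap (m : nat) := {ffun 'I_m -> option 'I_m}.

(* Product in PT_m for maps acting on the right: x (f g) = (x f) g. *)
Definition pmap_mul (m : nat) (f g : pmap m) : pmap m :=
  [ffun x => obind g (f x)].

Definition faithful_partial_action_of_degree (S : Type) (mul : S -> S -> S)
    (m : nat) : Prop :=
  exists phi : S -> pmap m,
    injective phi /\ forall a b, phi (mul a b) = pmap_mul (phi a) (phi b).

Definition min_faithful_partial_degree (S : Type) (mul : S -> S -> S)
    (d : nat) : Prop :=
  faithful_partial_action_of_degree mul d /\
  forall m, faithful_partial_action_of_degree mul m -> d <= m.

(* Main.v *)
Require Import Defs.
From mathcomp Require Import all_boot all_algebra all_field.
From mathcomp Require Import fingroup perm cyclic.
From mathcomp Require Import zify.
Import Defs.
Set Implicit Arguments. Unset Strict Implicit. Unset Printing Implicit Defensive.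

Module PartA.

Definition fsum k := \sum_(p <- primes k) p ^ logn p k.

Lemma sum_le_prod (s : seq nat) : all (fun x => 1 < x) s ->
  \sum_(x <- s) x <= \prod_(x <- s) x.
Proof.
suff: all (fun x => 1 < x) s ->
  [/\ \sum_(x <- s) x <= \prod_(x <- s) x, 0 < \prod_(x <- s) x &
      (\sum_(x <- s) x == 0) || (1 < \prod_(x <- s) x)].
  by move=> H /H [].
elim: s => [|a s IH]; first by rewrite !big_nil.
rewrite /= !big_cons => /andP[a1 /IH [h1 h2 h3]].
move: h3 => /orP [/eqP h3|h3]; split; nia.
Qed.

Lemma fsum_le c : 0 < c -> fsum c <= c.
Proof.
move=> c0; rewrite {2}(prod_prime_decomp c0) prime_decompE big_map /fsum.
rewrite -(big_map (fun p => p ^ logn p c) xpredT id).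
rewrite -(big_map (fun p => p ^ logn p c) xpredT id).
apply: sum_le_prod; apply/allP => x /mapP [p pc ->].
have pp : prime p by move: pc; rewrite mem_primes => /andP[].
have lp : 0 < logn p c by rewrite logn_gt0.
by rewrite -(expn0 p) ltn_exp2l ?prime_gt1.
Qed.

Lemma nt_key c k p : 0 < k -> c %| k -> p \in primes k -> ~~ (c %| k %/ p) ->
  p ^ logn p k %| c.
Proof.
move=> k0 ck pk ncp.
have pp : prime p by move: pk; rewrite mem_primes => /andP[].
have c0 : 0 < c by apply: dvdn_gt0 ck.
have e0 : 0 < logn p k by rewrite logn_gt0.
have [m cpm cE] := pfactor_coprime pp c0.
have [m' cpm' kE] := pfactor_coprime pp k0.
rewrite pfactor_dvdn //; rewrite leqNgt; apply/negP => lt.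
apply: (negP ncp).
have -> : k %/ p = m' * p ^ (logn p k).-1.
  rewrite {1}kE -(prednK e0) expnS mulnCA mulKn // prime_gt0 //.
rewrite cE; apply: dvdn_mul; last by rewrite dvdn_exp2l //; lia.
have : m %| m' * p ^ logn p k by rewrite -kE (dvdn_trans _ ck) // cE dvdn_mulr.
rewrite Gauss_dvdl // coprimeXr // coprime_sym.
by [].
Qed.

Lemma sum_pred_le (r : seq nat) (P Q : pred nat) (F G : nat -> nat) :
  (forall i, i \in r -> P i -> Q i && (F i <= G i)) ->
  \sum_(i <- r | P i) F i <= \sum_(i <- r | Q i) G i.
Proof.
elim: r => [|a r IH] H; first by rewrite !big_nil.
rewrite !big_cons.
have IH' := IH (fun i ir => H i (mem_behead (s := a :: r) ir)).
case Pa: (P a).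
  have /andP[-> le] := H a (mem_head _ _) Pa.
  exact: leq_add.
case: (Q a) => //; exact: leq_trans IH' (leq_addl _ _).
Qed.

Lemma sum_pred_split (r : seq nat) (P P1 P2 : pred nat) (F : nat -> nat) :
  (forall i, P i -> P1 i || P2 i) ->
  \sum_(i <- r | P i) F i <= \sum_(i <- r | P1 i) F i + \sum_(i <- r | P2 i) F i.
Proof.
move=> H; elim: r => [|a r IH]; first by rewrite !big_nil.
rewrite !big_cons.
case Pa: (P a); last first.
  apply: leq_trans IH _; apply: leq_add; case: ifP => _ //; exact: leq_addl.
have := H a Pa.
case: (P1 a); case: (P2 a) => //= _; lia.
Qed.

Lemma iter_porbit_mod (T : finType) (s : {perm T}) x j :
  iter j s x = iter (j %% #|porbit s x|) s x.
Proof.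
rewrite {1}(divn_eq j #|porbit s x|) addnC iterD.
suff -> : iter (j %/ #|porbit s x| * #|porbit s x|) s x = x by [].
elim: (j %/ _) => [|q IH] //.
by rewrite mulSn iterD IH iter_porbit.
Qed.

Lemma iter_porbit_dvd (T : finType) (s : {perm T}) x j :
  (iter j s x == x) = (#|porbit s x| %| j).
Proof.
rewrite iter_porbit_mod /dvdn.
have c0 : 0 < #|porbit s x| by rewrite lt0n card_porbit_neq0.
apply/eqP/eqP => [E|->] //.
have U := uniq_traject_porbit s x.
have lt : j %% #|porbit s x| < #|porbit s x| by rewrite ltn_mod.
have h1 := nth_traject s lt x; rewrite E in h1.
have h0 : nth x (traject s x #|porbit s x|) 0 = x := nth_traject s c0 x.
have h2 : nth x (traject s x #|porbit s x|) (j %% #|porbit s x|) =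
   nth x (traject s x #|porbit s x|) 0 by rewrite h1 h0.
move/eqP: h2; rewrite nth_uniq ?size_traject //.
by move/eqP.
Qed.

Lemma sum_primes_sub k c : 0 < k -> c %| k ->
  \sum_(p <- primes k | p \in primes c) p ^ logn p c = fsum c.
Proof.
move=> k0 ck; rewrite -big_filter /fsum; apply: perm_big.
apply: uniq_perm; rewrite ?filter_uniq ?primes_uniq // => p.
rewrite mem_filter; apply/andP/idP => [[] //|pc]; split => //.
move: pc; rewrite !mem_primes => /and3P[-> _ pc]; rewrite k0.
exact: dvdn_trans pc ck.
Qed.

Lemma cyc_bound (T : finType) (s : {perm T}) (k : nat) (k0 : 0 < k) (D : {set T}) :
  (forall x, x \in D -> s x \in D) -> (forall x, x \in D -> iter k s x = x) ->
  \sum_(p <- primes k | [exists x in D, iter (k %/ p) s x != x]) p ^ logn p k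
    <= #|D|.
Proof.
have [N] := ubnP #|D|; elim: N D => [|N IH] D // ltD Dcl Dk.
case: (set_0Vmem D) => [-> | [x xD]].
  rewrite big1 // => p /existsP [y /andP []]; by rewrite inE.
set C := porbit s x.
have iterD y i : y \in D -> iter i s y \in D.
  by move=> yD; elim: i => [|i IHi] //=; apply: Dcl.
have CD : C \subset D.
  by apply/subsetP => y /porbitP [i ->]; rewrite permX; exact: iterD.
set D' := D :\: C.
have cardD : #|D| = #|C| + #|D'|.
  rewrite /D' cardsD (setIidPr CD).
  have := subset_leq_card CD; lia.
have xC : x \in C := porbit_id s x.
have c0 : 0 < #|C| by apply/card_gt0P; exists x.
have ltD' : #|D'| < N by lia.
have D'cl : forall y, y \in D' -> s y \in D'.
  move=> y; rewrite !inE => /andP [yC yD]; rewrite Dcl // andbT.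
  apply: contra yC => syC.
  have E1 : porbit s (s y) = C by apply/eqP; rewrite eq_porbit_mem.
  have E2 : porbit s (s y) = porbit s y by have := porbit_perm s 1 y; rewrite expg1.
  by rewrite -E1 E2 porbit_id.
have D'k : forall y, y \in D' -> iter k s y = y.
  by move=> y; rewrite inE => /andP [_ /Dk].
have IH' := IH D' ltD' D'cl D'k.
set c := #|C|.
have cdk : c %| k.
  by rewrite -iter_porbit_dvd; apply/eqP; apply: Dk.
have HC : \sum_(p <- primes k | [exists y in C, iter (k %/ p) s y != y])
            p ^ logn p k <= c.
  apply: leq_trans (fsum_le c0).
  rewrite -(sum_primes_sub k0 cdk).
  apply: sum_pred_le => p pk /existsP [y /andP [yC ne]].
  have Ey : porbit s y = C by apply/eqP; rewrite eq_porbit_mem.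
  rewrite iter_porbit_dvd Ey in ne.
  have pp : prime p by move: pk; rewrite mem_primes => /andP[].
  have e0 : 0 < logn p k by rewrite logn_gt0.
  have := nt_key k0 cdk pk ne; rewrite pfactor_dvdn // => le.
  rewrite -logn_gt0 (leq_trans e0 le) /=.
  by rewrite leq_pexp2l // prime_gt0.
rewrite cardD; apply: leq_trans (leq_add HC IH').
apply: sum_pred_split => p /existsP [y /andP [yD ne]].
case yC : (y \in C).
  by apply/orP; left; apply/existsP; exists y; rewrite yC.
by apply/orP; right; apply/existsP; exists y; rewrite !inE yC yD.
Qed.

End PartA.
Import PartA.

Module PartB.
Import GRing.Theory.
Local Open Scope ring_scope.

Definition ucol (F : fieldType) n (w : 'rV[F]_n) : 'cV[F]_n :=
  match [pick j | w 0 j != 0] with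
  | Some j => (w 0 j)^-1 *: delta_mx j 0
  | None => 0
  end.

Lemma ucolP (F : fieldType) n (w : 'rV[F]_n) : w != 0 -> w *m ucol w = 1%:M.
Proof.
move=> w0; rewrite /ucol; case: pickP => [j wj | none].
  rewrite -scalemxAr -colE; apply/matrixP => a b.
  by rewrite !ord1 !mxE /= mulVf.
case/negP: w0; apply/eqP/matrixP => a b; rewrite ord1 mxE.
by move: (none b) => /negbFE /eqP.
Qed.

Lemma exists_kill (F : fieldType) n (w1 w2 : 'rV[F]_n) :
  ~~ (w2 <= w1)%MS -> exists A : 'M[F]_n, w1 *m A = 0 /\ w2 *m A = w2.
Proof.
rewrite submxE => r0.
have hB := mulmx_coker w1; move: r0 hB; set B := cokermx w1 => r0 hB; clearbody B.
exists (B *m ucol (w2 *m B) *m w2); split.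
  by rewrite !mulmxA hB !mul0mx.
by rewrite !mulmxA ucolP // mul1mx.
Qed.

Lemma prim_exists (F : finFieldType) : exists z : F, (#|F|.-1).-primitive_root z.
Proof.
set k := #|F|.-1.
have qE : #|F| = k.+1 by rewrite /k prednK //; apply/card_gt0P; exists 0.
have k0 : (0 < k)%N.
  rewrite /k -(cardC1 (0 : F)); apply/card_gt0P; exists 1; exact: oner_neq0.
have : has k.-primitive_root (enum (predC1 (0 : F))).
  apply: (@has_prim_root F k (enum (predC1 (0 : F))) k0).
  - apply/allP => x; rewrite mem_enum /= => x0.
    rewrite unity_rootE; apply/eqP; apply: (mulfI x0).
    by rewrite mulr1 -exprS -qE expf_card.
  - exact: enum_uniq.
  - by rewrite -cardE cardC1.
by case/hasP => z _ pz; exists z.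
Qed.

End PartB.
Import PartB.

Module PartC.
Import GRing.Theory.
Local Open Scope ring_scope.

Section Lower.
Variable F : finFieldType.
Variable n : nat.
Variable m : nat.
Variable phi : 'M[F]_n -> pmap m.
Hypothesis phi_inj : injective phi.
Hypothesis phi_hom : forall A B, phi (A *m B) = pmap_mul (phi A) (phi B).

Lemma phiM A B x : phi (A *m B) x = obind (phi B) (phi A x).
Proof. by rewrite phi_hom ffunE. Qed.

Definition Zs := [set x | phi 0 x == Some x].

Lemma Zfix A x : x \in Zs -> phi A x = Some x.
Proof.
rewrite inE => /eqP h.
by have := phiM 0 A x; rewrite mul0mx h /= => <-.
Qed.

Definition Ew (w : 'rV[F]_n) := ucol w *m w.

Lemma Ew_idem w : w != 0 -> Ew w *m Ew w = Ew w.
Proof. by move=> w0; rewrite /Ew mulmxA -(mulmxA (ucol w) w) ucolP // mulmx1. Qed.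

Lemma wEw w : w != 0 -> w *m Ew w = w.
Proof. by move=> w0; rewrite /Ew mulmxA ucolP // mul1mx. Qed.

Lemma EwZ w a b : w != 0 -> (a *: Ew w) *m (b *: Ew w) = (a * b) *: Ew w.
Proof. by move=> w0; rewrite -scalemxAl -scalemxAr Ew_idem // scalerA. Qed.

Lemma Ew_neq0 w : w != 0 -> Ew w != 0.
Proof.
move=> w0; apply/eqP => E0; have := wEw w0; rewrite E0 mulmx0 => h.
by rewrite -h eqxx in w0.
Qed.

Definition Is w := [set x | phi (Ew w) x == Some x].
Definition Ds w := [set x | (phi (Ew w) x == Some x) && (x \notin Zs)].

Lemma Ew_img w x y : w != 0 -> phi (Ew w) x = Some y -> phi (Ew w) y = Some y.
Proof.
move=> w0 h; have := phiM (Ew w) (Ew w) x.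
by rewrite Ew_idem // h /= => <-.
Qed.

Lemma D_disj w1 w2 x : w1 != 0 -> w2 != 0 -> x \in Ds w1 -> x \in Ds w2 ->
  (w2 <= w1)%MS.
Proof.
move=> w10 w20; rewrite !inE => /andP [/eqP h1 xZ] /andP [/eqP h2 _].
apply: contraT => /exists_kill [A [hA1 hA2]].
have e1 : Ew w1 *m A = 0 by rewrite /Ew -mulmxA hA1 mulmx0.
have e2 : Ew w2 *m A = Ew w2 by rewrite /Ew -mulmxA hA2.
have := phiM (Ew w1) A x; rewrite e1 h1 /= => hx0.
have := phiM (Ew w2) A x; rewrite e2 h2 /= -hx0 => hx.
by move: xZ; rewrite hx eqxx.
Qed.

Lemma D_nonempty w : w != 0 -> (0 < #|Ds w|)%N.
Proof.
move=> w0; rewrite card_gt0; apply/negP => /eqP D0.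
have E : phi (Ew w) = phi 0.
  apply/ffunP => x.
  have := phiM (Ew w) 0 x; rewrite mulmx0 => ->.
  case hx : (phi (Ew w) x) => [y|] //=.
  have hy := Ew_img w0 hx.
  have yZ : y \in Zs.
    apply: contraT => yZ.
    have : y \in Ds w by rewrite inE hy eqxx yZ.
    by rewrite D0 inE.
  by rewrite (Zfix 0 yZ).
have := Ew_neq0 w0; by rewrite (phi_inj E) eqxx.
Qed.

Section Cyc.
Variable w : 'rV[F]_n.
Hypothesis w0 : w != 0.
Variable z : F.
Let k := #|F|.-1.
Hypothesis pz : k.-primitive_root z.

Let E := Ew w.
Let g x := odflt x (phi (z *: E) x).

Lemma k_gt0 : (0 < k)%N.
Proof. exact: prim_order_gt0 pz. Qed.

Lemma zk1 : (z *: E) *m (z ^+ k.-1 *: E) = E.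
Proof.
rewrite EwZ // -exprS prednK ?k_gt0 // prim_expr_order // scale1r //.
Qed.

Lemma g_step y : y \in Is w -> phi (z *: E) y = Some (g y) /\ g y \in Is w.
Proof.
rewrite inE => /eqP hy.
have := phiM (z *: E) (z ^+ k.-1 *: E) y; rewrite zk1 hy.
rewrite /g; case h : (phi (z *: E) y) => [y'|] //= _; split => //.
have := phiM (z *: E) E y.
rewrite -[E in (_ *m E)]scale1r EwZ // mulr1 h /= => hh.
by rewrite inE -hh.
Qed.

Lemma g_iter j y : y \in Is w ->
  phi (z ^+ j *: E) y = Some (iter j g y) /\ iter j g y \in Is w.
Proof.
move=> yI; elim: j => [|j [IH1 IH2]].
  by rewrite expr0 scale1r /=; split => //; move: yI; rewrite inE => /eqP.
have [s1 s2] := g_step IH2.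
rewrite exprSr -EwZ // phiM IH1 /=; split => //.
Qed.

Lemma g_Z y : y \in Zs -> g y = y.
Proof. by move=> yZ; rewrite /g Zfix. Qed.

Lemma g_D y : y \in Ds w -> g y \in Ds w.
Proof.
rewrite !inE => /andP [hy yZ].
have yI : y \in Is w by rewrite inE.
have [s1 s2] := g_step yI.
move: s2; rewrite inE => ->; apply: contra yZ => gZ.
have gZ2 : g y \in Zs by rewrite inE.
have := phiM (z *: E) (z ^+ k.-1 *: E) y; rewrite zk1 s1 /= (@Zfix _ (g y) gZ2) (eqP hy).
by case=> hh; rewrite hh; rewrite inE in gZ2.
Qed.

Lemma g_k y : y \in Ds w -> iter k g y = y.
Proof.
move=> yD; have yI : y \in Is w by move: yD; rewrite !inE => /andP [].
have [h _] := g_iter k yI.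
move: h; rewrite prim_expr_order // scale1r.
by move: yI; rewrite inE => /eqP -> [].
Qed.

Lemma g_prime p : p \in primes k -> exists2 y, y \in Ds w & iter (k %/ p) g y != y.
Proof.
move=> pk.
have pp : prime p by move: pk; rewrite mem_primes => /andP[].
have pdk : (p %| k)%N by move: pk; rewrite mem_primes => /and3P[].
apply/exists_inP; apply: contraT; rewrite negb_exists_in => /forall_inP H.
set B := z ^+ (k %/ p) *: E.
have EB : phi B = phi E.
  apply/ffunP => x.
  have := phiM E B x; rewrite -[E in E *m _]scale1r EwZ // mul1r => ->.
  case hx : (phi E x) => [y|] //=.
  have hy := Ew_img w0 hx.
  have yI : y \in Is w by rewrite inE hy.
  case yZ : (y \in Zs); first by rewrite Zfix.
  have yD : y \in Ds w by rewrite [_ \in Ds w]inE hy eqxx yZ.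
  have [h _] := g_iter (k %/ p) yI; rewrite /B h.
  by move: (H y yD) => /negbNE /eqP ->.
have := phi_inj EB; rewrite /B => BE.
have : z ^+ (k %/ p) *: w = w.
  by rewrite -[in RHS](wEw w0) -/E -BE -scalemxAr wEw.
move/eqP; rewrite -subr_eq0 -{2}[w]scale1r -scalerBl scaler_eq0 (negbTE w0) orbF.
rewrite subr_eq0 -(prim_order_dvd pz) => /dvdn_leq.
have : (0 < k %/ p)%N by rewrite divn_gt0 ?prime_gt0 // dvdn_leq // k_gt0.
have := ltn_Pdiv (prime_gt1 pp) k_gt0.
move=> a b /(_ b); lia.
Qed.

Lemma D_card : (fsum k <= #|Ds w|)%N.
Proof.
pose g' x := if x \in Ds w then g x else x.
have g'inj : injective g'.
  have ginj : {in Ds w &, injective g}.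
    move=> x y xD yD gxy.
    rewrite -(g_k xD) -(g_k yD) -(prednK k_gt0) !iterSr gxy //.
  move=> x y; rewrite /g'.
  case xD : (x \in Ds w); case yD : (y \in Ds w) => //.
  - exact: ginj.
  - by move=> gx; move: (g_D xD); rewrite gx yD.
  - by move=> gy; move: (g_D yD); rewrite -gy xD.
set s := perm g'inj.
have itS j y : y \in Ds w -> iter j s y = iter j g y.
  move=> yD; elim: j => [|j IH] //=.
  have : iter j g y \in Ds w by elim: j {IH} => [|j IHj] //=; exact: g_D.
  by rewrite IH permE /g' => ->.
have H := @cyc_bound _ s k k_gt0 (Ds w).
apply: leq_trans (H _ _).
- rewrite /fsum; apply: sum_pred_le => p pk _; rewrite leqnn andbT.
  have [y yD ny] := g_prime pk.
  by apply/exists_inP; exists y => //; rewrite itS.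
- by move=> x xD; rewrite permE /g' xD g_D.
- by move=> x xD; rewrite itS // g_k.
Qed.

End Cyc.

Lemma fiber_bound x :
  (#|[pred w : 'rV[F]_n | (w != 0%R) && (x \in Ds w)]| <= #|F|.-1)%N.
Proof.
case: (pickP [pred w : 'rV[F]_n | (w != 0) && (x \in Ds w)]) => [w1 | none].
  move=> /andP [w10 xD1].
  apply: (@leq_trans #|[set c *: w1 | c in [set~ (0:F)]]|); last first.
    by rewrite (leq_trans (leq_imset_card _ _)) // cardsC1.
  apply: subset_leq_card; apply/subsetP => w2 /andP [w20 xD2].
  have /submxP [Dm hD] := D_disj w10 w20 xD1 xD2.
  have hD' : w2 = Dm 0 0 *: w1 by rewrite hD {1}(mx11_scalar Dm) mul_scalar_mx.
  apply/imsetP; exists (Dm 0 0) => //.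
  rewrite in_setC1; apply: contraNneq w20 => d0.
  by rewrite hD' d0 scale0r.
by rewrite (eq_card0 none).
Qed.

Definition y0 := if #|F| == 2 then 1%N else fsum #|F|.-1.

Lemma lower_sum : ((#|F| ^ n).-1 * y0 <= #|F|.-1 * m)%N.
Proof.
have [z pz] := prim_exists F.
have Dge w : w != 0 -> (y0 <= #|Ds w|)%N.
  by move=> w0; rewrite /y0; case: ifP => _; [exact: D_nonempty | exact: D_card pz].
have cA : #|predC1 (0 : 'rV[F]_n)| = (#|F| ^ n).-1 by rewrite cardC1 card_mx mul1n.
rewrite -cA -sum_nat_const.
apply: (@leq_trans (\sum_(w in predC1 (0 : 'rV[F]_n)) #|Ds w|)).
  by apply: leq_sum => w; apply: Dge.
under eq_bigr => w _ do rewrite -sum1_card big_mkcond /=.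
rewrite exchange_big /=.
apply: (@leq_trans (\sum_(x < m) #|F|.-1)); last first.
  by rewrite sum_nat_const card_ord mulnC.
apply: leq_sum => x _.
apply: leq_trans (fiber_bound x).
rewrite -sum1_card big_mkcond /= [X in (_ <= X)%N]big_mkcond /=.
apply: leq_sum => w _; rewrite /= inE.
have -> : (w \in [pred w0 : 'rV[F]_n | (w0 != 0%R) && (x \in Ds w0)]) = (w != 0) && (x \in Ds w) by [].
by case: (w != 0); case: (x \in Ds w).
Qed.

End Lower.

End PartC.
Import PartC.

Module PartU.
Import GRing.Theory.
Local Open Scope ring_scope.

Lemma transport (S : Type) (mul : S -> S -> S) (T : finType)
    (psi : S -> T -> option T) (d : nat) :
  (forall a b, psi a =1 psi b -> a = b) ->
  (forall a b t, psi (mul a b) t = obind (psi b) (psi a t)) ->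
  (#|T| <= d)%N -> faithful_partial_action_of_degree mul d.
Proof.
move=> inj hom le.
pose io (t : T) : 'I_d := widen_ord le (enum_rank t).
have io_inj : injective io.
  move=> x y /(congr1 val) /= h; apply: enum_rank_inj; exact: val_inj.
pose inv (i : 'I_d) : option T := [pick t | io t == i].
have invK t : inv (io t) = Some t.
  rewrite /inv; case: pickP => [t' /eqP /io_inj -> // | /(_ t)].
  by rewrite eqxx.
exists (fun a => [ffun i => obind (fun t => omap io (psi a t)) (inv i)]).
split.
  move=> a b /ffunP h; apply: inj => t.
  have := h (io t); rewrite !ffunE invK /=.
  case: (psi a t) => [x|]; case: (psi b t) => [y|] //=.
  by case=> e; rewrite (enum_rank_inj (val_inj e)).
move=> a b; apply/ffunP => i; rewrite !ffunE.
case: (inv i) => [t|] //=; rewrite hom.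
case: (psi a t) => [t'|] //=.
by rewrite ffunE invK.
Qed.

Section Upper.
Variable F : finFieldType.
Variable n : nat.

Definition lead (w : 'rV[F]_n) : F :=
  match [pick j | w 0 j != 0] with Some j => w 0 j | None => 0 end.
Definition nrm (w : 'rV[F]_n) := (lead w)^-1 *: w.
Definition normalized (w : 'rV[F]_n) := (w != 0) && (lead w == 1).

Lemma lead_eq0 w : (lead w == 0) = (w == 0).
Proof.
rewrite /lead; case: pickP => [j wj | none].
  rewrite (negbTE wj); apply/esym/negP => /eqP w0.
  by move: wj; rewrite w0 mxE eqxx.
rewrite eqxx; apply/esym/eqP/matrixP => a b; rewrite ord1 mxE.
by move: (none b) => /negbFE /eqP.
Qed.

Lemma leadZ a w : a != 0 -> lead (a *: w) = a * lead w.
Proof.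
move=> a0; rewrite /lead.
rewrite (@eq_pick _ _ [pred j | w 0 j != 0]); last first.
  by move=> j /=; rewrite mxE mulf_eq0 (negbTE a0).
by case: pickP => [j _|_]; rewrite ?mxE ?mulr0.
Qed.

Lemma nrm_dec w : lead w *: nrm w = w.
Proof.
rewrite /nrm scalerA; have [w0|w0] := eqVneq w 0; first by rewrite w0 scaler0.
by rewrite divff ?scale1r // lead_eq0.
Qed.

Lemma nrm_norm w : w != 0 -> normalized (nrm w).
Proof.
move=> w0; have l0 : lead w != 0 by rewrite lead_eq0.
rewrite /normalized /nrm scaler_eq0 invr_eq0 (negbTE l0) w0 /=.
by rewrite leadZ ?invr_eq0 // mulVf.
Qed.

Lemma nrmZ a v : a != 0 -> nrm (a *: v) = nrm v.
Proof.
move=> a0; have [v0|v0] := eqVneq v 0; first by rewrite v0 scaler0.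
have l0 : lead v != 0 by rewrite lead_eq0.
by rewrite /nrm leadZ // scalerA invfM mulrC mulrA divff // mul1r.
Qed.

Lemma nrm_id v : normalized v -> nrm v = v.
Proof. by case/andP => _ /eqP l1; rewrite /nrm l1 invr1 scale1r. Qed.

Lemma normalized0 : ~~ normalized 0.
Proof. by rewrite /normalized eqxx. Qed.

Notation Nrm := {w : 'rV[F]_n | normalized w}.

Lemma card_Nrm : (#|F|.-1 * #|{: Nrm}| <= (#|F| ^ n).-1)%N.
Proof.
pose f (p : F * Nrm) : 'rV[F]_n := p.1 *: val p.2.
pose A := setX [set~ (0 : F)] [set: Nrm].
have -> : (#|F|.-1 * #|{: Nrm}| = #|A|)%N by rewrite cardsX cardsC1 cardsT.
rewrite -(@card_in_imset _ _ f); last first.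
  move=> [a v] [b v']; rewrite !inE /= !andbT => a0 b0; rewrite /f /= => h.
  have nv := valP v; have nv' := valP v'.
  have ab : a = b.
    have := congr1 lead h; rewrite !leadZ //.
    by move: nv nv' => /andP [_ /eqP ->] /andP [_ /eqP ->]; rewrite !mulr1.
  subst b; congr (_, _); apply: val_inj.
  by rewrite -[val v]scale1r -(mulVf a0) -scalerA h scalerA mulVf // scale1r.
have -> : (#|F| ^ n = #|{: 'rV[F]_n}|)%N by rewrite card_mx mul1n.
rewrite -(cardsC1 (0 : 'rV[F]_n)); apply: subset_leq_card.
apply/subsetP => _ /imsetP [[a v] /setXP [a0 _] ->].
rewrite !inE /f /= scaler_eq0 negb_or.
by move: a0; rewrite !inE => -> /=; case/andP: (valP v).
Qed.

Variable Y : finType.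
Variable rho : F -> Y -> Y.
Hypothesis rhoM : forall a b y, a != 0 -> b != 0 -> rho (a * b) y = rho b (rho a y).
Hypothesis rho1 : forall y, rho 1 y = y.
Variable yY : Y.
Hypothesis rho_faith : forall a, a != 0 -> (forall y, rho a y = y) -> a = 1.

Definition psi (A : 'M[F]_n) (t : Nrm * Y) : option (Nrm * Y) :=
  let r := val t.1 *m A in
  omap (fun v' => (v', rho (lead r) t.2)) (insub (nrm r)).

Lemma psi_none A t : val t.1 *m A = 0 -> psi A t = None.
Proof. by move=> r0; rewrite /psi r0 /nrm scaler0 insubN // normalized0. Qed.

Lemma psi_some A t : val t.1 *m A != 0 ->
  exists v', val v' = nrm (val t.1 *m A) /\
    psi A t = Some (v', rho (lead (val t.1 *m A)) t.2).
Proof.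
move=> r0; rewrite /psi; case: insubP => [v' _ vE|]; last by rewrite nrm_norm.
by exists v'.
Qed.

Lemma psi_hom A B t : psi (A *m B) t = obind (psi B) (psi A t).
Proof.
have [r0|r0] := eqVneq (val t.1 *m A) 0.
  by rewrite psi_none ?psi_none // mulmxA r0 mul0mx.
have [v' [v'E ->]] := psi_some r0; rewrite /=.
set l := lead (val t.1 *m A).
have l0 : l != 0 by rewrite lead_eq0.
have rE : val t.1 *m A = l *: val v' by rewrite v'E nrm_dec.
have [r1|r1] := eqVneq (val v' *m B) 0.
  by rewrite (@psi_none B) // (@psi_none (A *m B)) //= mulmxA rE -scalemxAl r1 scaler0.
have [v'' [v''E ->]] := psi_some (t := (v', rho l t.2)) r1.
have r2 : val t.1 *m (A *m B) != 0.
  by rewrite mulmxA rE -scalemxAl scaler_eq0 negb_or l0.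
have [u [uE ->]] := psi_some r2.
have e : val t.1 *m (A *m B) = l *: (val v' *m B) by rewrite mulmxA rE scalemxAl.
congr (Some (_, _)).
  by apply: val_inj; rewrite uE v''E e nrmZ.
by rewrite e leadZ // rhoM // lead_eq0.
Qed.

Lemma psi_inj A B : psi A =1 psi B -> A = B.
Proof.
move=> h.
have hv : forall v : Nrm, val v *m A = val v *m B.
  move=> v.
  have [r1|r1] := eqVneq (val v *m A) 0.
    have := h (v, yY); rewrite psi_none //.
    have [r2|r2] := eqVneq (val v *m B) 0; first by rewrite r1 r2.
    by have [v' [_ ->]] := psi_some (t := (v, yY)) r2.
  have [r2|r2] := eqVneq (val v *m B) 0.
    have := h (v, yY); rewrite (@psi_none B) //.
    by have [v' [_ ->]] := psi_some (t := (v, yY)) r1.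
  set l1 := lead (val v *m A); set l2 := lead (val v *m B).
  have l10 : l1 != 0 by rewrite lead_eq0.
  have l20 : l2 != 0 by rewrite lead_eq0.
  have hy : forall y, nrm (val v *m A) = nrm (val v *m B) /\ rho l1 y = rho l2 y.
    move=> y; have := h (v, y).
    have [v1 [v1E ->]] := psi_some (t := (v, y)) r1.
    have [v2 [v2E ->]] := psi_some (t := (v, y)) r2.
    by case=> e1 e2; split => //; rewrite -v1E -v2E e1.
  have ll : l1 = l2.
    have c0 : l1 / l2 != 0 by rewrite mulf_neq0 ?invr_eq0.
    suff : l1 / l2 = 1 by move/(congr1 (fun x => x * l2)); rewrite divfK // mul1r.
    apply: rho_faith => // y.
    have e : y = rho l2 (rho l2^-1 y) by rewrite -rhoM ?invr_eq0 // mulVf.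
    rewrite [in RHS]e -(proj2 (hy _)) {2}e -!rhoM ?invr_eq0 //.
    by congr (rho _ y); rewrite mulrA mulVf // mul1r mulrC.
    by rewrite mulrA mulfV // mul1r.
    by rewrite mulf_neq0 ?invr_eq0.
  by rewrite -[LHS]nrm_dec -[RHS]nrm_dec (proj1 (hy yY)) -/l1 -/l2 ll.
have hw : forall w : 'rV[F]_n, w *m A = w *m B.
  move=> w; have [->|w0] := eqVneq w 0; first by rewrite !mul0mx.
  have := hv (Sub (nrm w) (nrm_norm w0)); rewrite SubK => e.
  have -> : w = lead w *: nrm w by rewrite nrm_dec.
  by rewrite -scalemxAl e scalemxAl.
by apply/row_matrixP => i; rewrite !rowE hw.
Qed.

End Upper.

End PartU.
Import PartU.

Module PartY.
Import GRing.Theory.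
Local Open Scope ring_scope.

Lemma unit_pow (F : finFieldType) (a : F) : a != 0 -> a ^+ #|F|.-1 = 1.
Proof.
move=> a0; apply: (mulfI a0); rewrite mulr1 -exprS prednK ?expf_card //.
by apply/card_gt0P; exists 0.
Qed.

Definition Ypred (F : finFieldType) (pr : 'I_#|F| * F) : bool :=
  (val pr.1 \in primes #|F|.-1) &&
  (pr.2 ^+ (val pr.1 ^ logn (val pr.1) #|F|.-1) == 1).

Lemma Y_exists (F : finFieldType) : exists (Y : finType) (rho : F -> Y -> Y) (yY : Y),
  [/\ (#|{: Y}| <= y0 F)%N,
      (forall a b y, a != 0 -> b != 0 -> rho (a * b) y = rho b (rho a y)),
      (forall y, rho 1 y = y) &
      (forall a, a != 0 -> (forall y, rho a y = y) -> a = 1)].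
Proof.
rewrite /y0; case: ifP => [/eqP q2 | q2].
  exists unit, (fun _ y => y), tt; split => //; first by rewrite card_unit.
  move=> a a0 _; apply/eqP.
  have : (#|[set a; 1%R]| <= #|[set~ (0%R : F)]|)%N.
    apply: subset_leq_card; apply/subsetP => x; rewrite !inE.
    by case/orP => /eqP ->; rewrite ?a0 ?oner_neq0.
  rewrite cards2 cardsC1 q2 ltnS leqn0. by case: (a == 1).
set k := #|F|.-1.
have qE : #|F| = k.+1 by rewrite /k prednK //; apply/card_gt0P; exists 0.
have q1 : (1 < #|F|)%N by rewrite qE ltnS /k -(cardC1 (0%R : F)); apply/card_gt0P; exists 1; exact: oner_neq0.
have k1 : (1 < k)%N by move: q2 q1; rewrite qE; lia.
have [z pz] := prim_exists F.
pose N (p : nat) := (p ^ logn p k)%N.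
pose K (p : nat) := (k %/ N p)%N.
have KN p : (K p * N p = k)%N by rewrite divnK // pfactor_dvdnn.
pose Y := {pr : 'I_#|F| * F | Ypred pr}.
pose f (a : F) (y : Y) : 'I_#|F| * F := ((val y).1, (val y).2 * a ^+ K (val y).1).
have fP a y : a != 0 -> Ypred (f a y).
  move=> a0; rewrite /Ypred /f /=; case/andP: (valP y) => -> /eqP h /=.
  rewrite exprMn h mul1r -exprM KN.
  by rewrite /k unit_pow.
pose rho (a : F) (y : Y) : Y := insubd y (f a y).
have rhoE a y : a != 0 -> val (rho a y) = f a y by move=> a0; apply: insubdK; exact: fP.
have ltp p : p \in primes k -> (p < #|F|)%N.
  by rewrite qE ltnS mem_primes => /and3P [_ k0 /dvdn_leq ->].
have Yp p (pk : p \in primes k) : Ypred (Ordinal (ltp p pk), 1).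
  by rewrite /Ypred /= pk expr1n eqxx.
have pk0 : pdiv k \in primes k.
  by rewrite mem_primes pdiv_prime // pdiv_dvd; lia.
exists {pr : 'I_#|F| * F | Ypred pr}, rho, (Sub _ (Yp _ pk0)); split.
- rewrite card_sig -sum1_card.
  have -> : (\sum_(pr in [pred pr | @Ypred F pr]) 1 =
      \sum_(i : 'I_#|F|) \sum_(x : F | @Ypred F (i, x)) 1)%N.
    by rewrite pair_big_dep /=; apply: eq_bigl => -[i x].
  have bound (i : 'I_#|F|) : (\sum_(x : F | @Ypred F (i, x)) 1 <=
      (if val i \in primes k then N i else 0))%N.
    rewrite sum1_card; case pi : (val i \in primes k); last first.
      by rewrite eq_card0 // => x; rewrite /Ypred /= pi.
    rewrite cardE; apply: max_unity_roots.
    + by rewrite expn_gt0 prime_gt0 //; move: pi; rewrite mem_primes => /andP [].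
    + by apply/allP => x; rewrite mem_enum unity_rootE; rewrite unfold_in /=.
    + exact: enum_uniq.
  apply: leq_trans; first by apply: leq_sum => i _; exact: bound.
  rewrite -big_mkcond /= -(big_mkord (fun i => i \in primes k) N) -big_filter /fsum.
  apply/eq_leq/perm_big; apply: uniq_perm.
  + by rewrite filter_uniq // iota_uniq.
  + exact: primes_uniq.
  + move=> p; rewrite mem_filter mem_index_iota /=.
    by apply/andP/idP => [[] //|pk]; split => //; rewrite ltp.
- move=> a b y a0 b0; apply: val_inj; rewrite !rhoE ?mulf_neq0 // /f /=.
  have e : sval (rho a y) = f a y := rhoE a y a0.
  by rewrite e /f /= exprMn mulrA.
- move=> y; apply: val_inj; rewrite rhoE ?oner_neq0 // /f expr1n mulr1.
  by case: (val y).
- move=> a a0 h.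
  have [j aj] := prim_rootP pz (unit_pow a0).
  have hp p : p \in primes k -> (N p %| j)%N.
    move=> pk; have := congr1 val (h (Sub _ (Yp _ pk))).
    rewrite rhoE // SubK /f /= mul1r => -[] /eqP.
    rewrite aj -exprM -(prim_order_dvd pz) => H.
    have pp : prime p by move: pk; rewrite mem_primes => /andP [].
    have Kp0 : (0 < K p)%N.
      rewrite /K divn_gt0 ?expn_gt0 ?prime_gt0 // dvdn_leq ?pfactor_dvdnn //.
      lia.
    have : (K p * N p %| K p * j)%N by rewrite KN mulnC.
    by rewrite dvdn_pmul2l.
  have : (k %| j)%N.
    apply/dvdn_partP; first lia.
    by move=> p pk; rewrite p_part; apply: hp.
  by rewrite (prim_order_dvd pz) -aj => /eqP.
Qed.

End PartY.
Import PartY.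




Theorem corollary2p14 (F : finFieldType) (n : nat) (hn : 0 < n) :
  min_faithful_partial_degree (@mulmx F n n n)
    (if #|F| == 2 then 2 ^ n - 1
     else (#|F| ^ n - 1) %/ (#|F| - 1) *
          \sum_(p <- primes (#|F| - 1)) p ^ logn p (#|F| - 1)).
Proof.
have q1 : 1 < #|F|.
  have : 0 < #|predC1 (0%R : F)|.
    by apply/card_gt0P; exists 1%R; exact: GRing.oner_neq0.
  by rewrite cardC1; case: #|F| => [|[|q]].
have -> : (if #|F| == 2 then 2 ^ n - 1
     else (#|F| ^ n - 1) %/ (#|F| - 1) *
          \sum_(p <- primes (#|F| - 1)) p ^ logn p (#|F| - 1)) =
     (#|F| ^ n).-1 %/ #|F|.-1 * y0 F.
  rewrite /y0 !subn1; case: ifP => [/eqP -> | _] //.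
  by rewrite divn1 muln1.
have k0 : 0 < #|F|.-1 by move: q1; case: #|F| => [|[|q]].
split.
  have [Y [rho [yY [cY rM r1 rF]]]] := Y_exists F.
  apply: (@transport _ _ _ (psi rho)).
  - by move=> A B; apply: psi_inj rM r1 yY rF A B.
  - by move=> A B t; apply: psi_hom.
  - rewrite card_prod; apply: leq_mul => //.
    by rewrite leq_divRL // mulnC card_Nrm.
move=> m [phi [inj hom]].
have H := lower_sum inj hom.
rewrite -(leq_pmul2r k0) [m * _]mulnC.
apply: leq_trans H.
by rewrite mulnAC leq_mul2r leq_divM orbT.
Qed.
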